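(* Assume no two of $\bm u_1,\dots,\bm u_m$ are parallel (i.e. the linear arrangement $\{\langle\bm u_i,\bm x\rangle=0\}$ has no repeated hyperplane). Then for $\bm a,\bm b\in\mathbb{R}^m$, the parallel translations $\mathcal{A}_{\bm a}$ and $\mathcal{A}_{\bm b}$ are normally equivalent if and only if $\operatorname{sign}(\mathcal{A}_{\bm a})=\operatorname{sign}(\mathcal{A}_{\bm b})$.
   Context: Fix nonzero $\bm u_1,\dots,\bm u_m\in\mathbb{R}^n$. For $\bm a\in\mathbb{R}^m$, $\mathcal{A}_{\bm a}$ is the indexed arrangement of hyperplanes $\langle\bm u_i,\bm x\rangle=a_i$, $i=1,\dots,m$. The sign vector of $\bm x$ is $(\operatorname{sign}(\langle\bm u_i,\bm x\rangle-a_i))_{i}$, and $\operatorname{sign}(\mathcal{A}_{\bm a})$ is the set of all such sign vectors. Faces: closures of the nonempty sets of points with a common sign vector; $\mathcal{F}(\mathcal{A})$ ordered by inclusion. For a nonempty convex polyhedron $P$: $h_P(\bm u)=\sup_{\bm x\in P}\langle\bm u,\bm x\rangle$, $N_P(\bm x)=\{\bm u:\langle\bm u,\bm x\rangle=h_P(\bm u)\}$, $N_P(G)=N_P(\bm x)$ for $\bm x\in\operatorname{relint}(G)$, $\mathcal{N}(P)$ the set of all $N_P(G)$; $P,Q$ normally equivalent iff $\mathcal{N}(P)=\mathcal{N}(Q)$. Arrangements $\mathcal{A},\mathcal{A}'$ in $\mathbb{R}^n$ are normally equivalent if there is an order-preserving bijection $\Psi:\mathcal{F}(\mathcal{A})\to\mathcal{F}(\mathcal{A}')$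 with $F,\Psi(F)$ normally equivalent for all faces $F$. *)

(* Defs.v *)
From HB Require Import structures.
From mathcomp Require Import all_boot all_order all_algebra.
From mathcomp Require Import all_classical all_reals.
From mathcomp Require Import all_analysis.
Set Implicit Arguments. Unset Strict Implicit. Unset Printing Implicit Defensive.
Import Order.TTheory GRing.Theory Num.Theory.
Import numFieldNormedType.Exports.
Local Open Scope classical_set_scope.
Local Open Scope ring_scope.

Section Defs.
Variables (R : realType) (n : nat).
Local Notation V := 'rV[R]_n.

Definition dot (u x : V) : R := \sum_(i < n) u ord0 i * x ord0 i.

Definition supp_fun (P : set V) (u : V) : \bar R :=
  ereal_sup [set (dot u x)%:E | x in P].

Definition normal_cone (P : set V) (x : V) : set V :=
  [set u | (dot u x)%:E = supp_fun P u].

(* nonempty faces of P: intersections of P with a supporting hyperplane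
   where the supremum is attained (u = 0 gives P itself) *)
Definition poly_face (P G : set V) : Prop :=
  G !=set0 /\ exists u : V, G = P `&` [set x | (dot u x)%:E = supp_fun P u].

Definition aff_hull (G : set V) : set V :=
  [set x | exists (k : nat) (p : 'I_k -> V) (c : 'I_k -> R),
      (forall i, G (p i)) /\ \sum_(i < k) c i = 1 /\
      x = \sum_(i < k) c i *: p i].

Definition relint (G : set V) : set V :=
  [set x | G x /\ exists e : R, 0 < e /\ (ball x e `&` aff_hull G) `<=` G].

Definition normal_cone_face (P G : set V) (N : set V) : Prop :=
  exists x, relint G x /\ N = normal_cone P x.

Definition normal_fan (P : set V) : set (set V) :=
  [set N | exists G, poly_face P G /\ normal_cone_face P G N].

Definition poly_normally_equiv (P Q : set V) : Prop :=
  normal_fan P = normal_fan Q.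

Variable m : nat.

Definition signvec (u : 'I_m -> V) (a : 'I_m -> R) (x : V) : 'rV[R]_m :=
  \row_(i < m) Num.sg (dot (u i) x - a i).

Definition arr_sign (u : 'I_m -> V) (a : 'I_m -> R) : set 'rV[R]_m :=
  range (signvec u a).

Definition arr_faces (u : 'I_m -> V) (a : 'I_m -> R) : set (set V) :=
  [set F | exists s, (exists x, signvec u a x = s) /\
                     F = closure [set x | signvec u a x = s]].

Definition arr_normally_equiv (u : 'I_m -> V) (a b : 'I_m -> R) : Prop :=
  exists Psi : set V -> set V,
    [/\ (forall F, arr_faces u a F -> arr_faces u b (Psi F)),
        (forall F G, arr_faces u a F -> arr_faces u a G -> Psi F = Psi G -> F = G),
        (forall G, arr_faces u b G -> exists2 F, arr_faces u a F & Psi F = G),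
        (forall F G, arr_faces u a F -> arr_faces u a G -> F `<=` G -> Psi F `<=` Psi G)
      & (forall F, arr_faces u a F -> poly_normally_equiv F (Psi F))].

End Defs.

(* Main.v *)
Require Import Defs.
From HB Require Import structures.
From mathcomp Require Import all_boot all_order all_algebra.
From mathcomp Require Import all_classical all_reals.
From mathcomp Require Import all_analysis.
From mathcomp Require Import ring lra.
Import Order.TTheory GRing.Theory Num.Theory.
Import numFieldNormedType.Exports.
Local Open Scope classical_set_scope.
Local Open Scope ring_scope.
Set Implicit Arguments. Unset Strict Implicit. Unset Printing Implicit Defensive.

Section Basic.
Variables (R : realType) (n : nat).
Local Notation V := 'rV[R]_n.

Lemma dotDr (w x y : V) : dot w (x + y) = dot w x + dot w y.
Proof. by rewrite /dot -big_split; apply: eq_bigr => i _; rewrite mxE mulrDr. Qed.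
Lemma dotNr (w x : V) : dot w (- x) = - dot w x.
Proof. by rewrite /dot -sumrN; apply: eq_bigr => i _; rewrite mxE mulrN. Qed.
Lemma dotBr (w x y : V) : dot w (x - y) = dot w x - dot w y.
Proof. by rewrite dotDr dotNr. Qed.
Lemma dotZr (w x : V) c : dot w (c *: x) = c * dot w x.
Proof. by rewrite /dot mulr_sumr; apply: eq_bigr => i _; rewrite mxE mulrCA. Qed.
Lemma dotC (w x : V) : dot w x = dot x w.
Proof. by rewrite /dot; apply: eq_bigr => i _; rewrite mulrC. Qed.
Lemma dotDl (w w' x : V) : dot (w + w') x = dot w x + dot w' x.
Proof. by rewrite dotC dotDr !(dotC x). Qed.
Lemma dotZl (w x : V) c : dot (c *: w) x = c * dot w x.
Proof. by rewrite dotC dotZr dotC. Qed.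
Lemma dotNl (w x : V) : dot (- w) x = - dot w x.
Proof. by rewrite dotC dotNr dotC. Qed.
Lemma dot0l (x : V) : dot 0 x = 0.
Proof. by rewrite /dot big1 // => i _; rewrite mxE mul0r. Qed.
Lemma dot0r (x : V) : dot x 0 = 0.
Proof. by rewrite dotC dot0l. Qed.
Lemma dot_suml (I : Type) (r : seq I) (P : pred I) (F : I -> V) x :
  dot (\sum_(i <- r | P i) F i) x = \sum_(i <- r | P i) dot (F i) x.
Proof.
elim/big_rec2: _ => [|i y1 y2 _ <-]; first exact: dot0l.
by rewrite dotDl.
Qed.
Lemma dot_sumr (I : Type) (r : seq I) (P : pred I) (F : I -> V) x :
  dot x (\sum_(i <- r | P i) F i) = \sum_(i <- r | P i) dot x (F i).
Proof.
by rewrite dotC dot_suml; apply: eq_bigr => i _; rewrite dotC.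
Qed.
Lemma dot_self_ge0 (x : V) : 0 <= dot x x.
Proof. by rewrite /dot sumr_ge0 // => i _; rewrite -expr2 sqr_ge0. Qed.
Lemma dot_self_eq0 (x : V) : dot x x = 0 -> x = 0.
Proof.
move=> /eqP; rewrite /dot psumr_eq0 => [/allP H|i _]; last by rewrite -expr2 sqr_ge0.
apply/rowP => j; rewrite mxE; apply/eqP; rewrite -sqrf_eq0 expr2.
by apply: (implyP (H j (mem_index_enum j))).
Qed.

Definition l1 (w : V) := \sum_(k < n) `|w ord0 k|.
Lemma l1_ge0 w : 0 <= l1 w. Proof. by rewrite sumr_ge0. Qed.

Lemma dot_ball (w x y : V) e : ball x e y -> `|dot w y - dot w x| <= l1 w * e.
Proof.
move=> [e0 H]; rewrite -dotBr /dot /l1 mulr_suml.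
apply: le_trans (ler_norm_sum _ _ _) _; apply: ler_sum => k _.
rewrite normrM ler_wpM2l //.
have := H ord0 k; rewrite /ball /= !mxE => /ltW; by rewrite distrC.
Qed.
End Basic.

Section SignFacts.
Variable R : realType.
Lemma sg_cases (x : R) : (x < 0 /\ Num.sg x = -1) \/ (x = 0 /\ Num.sg x = 0) \/ (0 < x /\ Num.sg x = 1).
Proof.
case: (ltrgtP x 0) => h.
- by left; split => //; rewrite ltr0_sg.
- by right; right; split => //; rewrite gtr0_sg.
- by right; left; split => //; rewrite h sgr0.
Qed.

Lemma sg_comb (p q l : R) : 0 < l -> l <= 1 ->
  (Num.sg p = 0 \/ Num.sg p = Num.sg q) -> Num.sg ((1 - l) * p + l * q) = Num.sg q.
Proof.
move=> l0 l1 hp.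
have l1' : 0 <= 1 - l by rewrite subr_ge0.
case: (sg_cases q) => [[q0 sq]|[[q0 sq]|[q0 sq]]]; rewrite sq in hp *;
  case: (sg_cases p) => [[p0 sp]|[[p0 sp]|[p0 sp]]]; rewrite sp in hp;
  try (by case: hp => h; move: h; lra).
- by apply: ltr0_sg; nra.
- by apply: ltr0_sg; rewrite p0; nra.
- by rewrite p0 q0 !mulr0 addr0 sgr0.
- by apply: gtr0_sg; rewrite p0; nra.
- by apply: gtr0_sg; nra.
Qed.

Lemma sg_pert (c d : R) : c != 0 -> `|d| < `|c| -> Num.sg (c + d) = Num.sg c.
Proof.
move=> c0 hd; have h1 := ler_norm d; have h2 : - d <= `|d| by rewrite -normrN ler_norm.
case: (sg_cases c) => [[cn ->]|[[c0' _]|[cp ->]]].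
- apply: ltr0_sg; move: hd; rewrite (ltr0_norm cn); lra.
- by move: c0; rewrite c0' eqxx.
- apply: gtr0_sg; move: hd; rewrite (gtr0_norm cp); lra.
Qed.

Lemma small_eps (I : finType) (P : pred I) (c k : I -> R) :
  (forall i, P i -> 0 < c i) -> exists2 e : R, 0 < e & forall i, P i -> e * `|k i| < c i.
Proof.
move=> hc.
exists (\big[Num.min/1]_(i | P i) (c i / (`|k i| + 1))).
  by apply: lt_bigmin => // i Pi; rewrite divr_gt0 ?hc // ltr_wpDl.
move=> i Pi.
have kp : 0 < `|k i| + 1 by rewrite ltr_wpDl.
apply: (le_lt_trans (y := c i / (`|k i| + 1) * `|k i|)).
  by rewrite ler_wpM2r //; exact: bigmin_le_cond.
rewrite mulrAC ltr_pdivrMr // ltr_pM2l ?hc // ltrDl //.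
Qed.
End SignFacts.

Section Arr.
Variables (R : realType) (n m : nat) (u : 'I_m -> 'rV[R]_n).
Local Notation V := 'rV[R]_n.
Local Notation S := 'rV[R]_m.
Implicit Types (a : 'I_m -> R) (s t : S) (x y z : V).

Definition fv a i x := dot (u i) x - a i.
Lemma svE a x i : signvec u a x ord0 i = Num.sg (fv a i x).
Proof. by rewrite mxE. Qed.

Definition sle t s := forall i, t ord0 i = 0 \/ t ord0 i = s ord0 i.
Definition cell a s := [set x | signvec u a x = s].
Definition conf a s := [set x | sle (signvec u a x) s].
Definition realized a s := exists x, signvec u a x = s.

Lemma sle_refl s : sle s s. Proof. by move=> i; right. Qed.
Lemma sle_trans t1 t2 t3 : sle t1 t2 -> sle t2 t3 -> sle t1 t3.
Proof. move=> h1 h2 i; case: (h1 i) => ->; [by left|exact: h2]. Qed.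
Lemma sle_anti t s : sle t s -> sle s t -> t = s.
Proof.
move=> h1 h2; apply/rowP => j.
by case: (h1 j) => // e; case: (h2 j) => // e'; rewrite e e'.
Qed.

Lemma fv_comb a i x y l : fv a i (x + l *: (y - x)) = (1 - l) * fv a i x + l * fv a i y.
Proof. by rewrite /fv dotDr dotZr dotBr; ring. Qed.

Lemma cell_conf a s : cell a s `<=` conf a s.
Proof. by move=> x hx; rewrite /conf /= hx; apply: sle_refl. Qed.

Lemma closure_cell a s : realized a s -> closure (cell a s) = conf a s.
Proof.
move=> [x0 hx0]; apply/seteqP; split.
- move=> z hz i; apply: contrapT => /not_orP [h1 h2].
  rewrite svE in h1 h2; set c := fv a i z in h1 h2.
  have c0 : c != 0 by apply/eqP => c0; apply: h1; rewrite c0 sgr0.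
  have cp : 0 < `|c| by rewrite normr_gt0.
  have ep : 0 < `|c| / (l1 (u i) + 1) by rewrite divr_gt0 // ltr_wpDl // l1_ge0.
  have [y [/= hy1 hy2]] := hz _ (nbhsx_ballx z _ ep).
  have hd := dot_ball (u i) hy2.
  have : `|fv a i y - c| < `|c|.
    rewrite /c /fv opprB addrA subrK.
    apply: le_lt_trans hd _.
    rewrite mulrA ltr_pdivrMr ?ltr_wpDl ?l1_ge0 // mulrC ltr_pM2l // ltrDl //.
  move=> hlt; have := sg_pert c0 hlt; rewrite addrC subrK => e.
  apply: h2; rewrite -e -svE hy1 //.
- move=> z hz B /nbhs_ballP [e /= e0 hB].
  set d := x0 - z.
  have K0 := l1_ge0 d.
  set l := e / (e + l1 d + 1).
  have den : 0 < e + l1 d + 1 by rewrite ltr_wpDl // addr_ge0 // ltW.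
  have l0 : 0 < l by rewrite divr_gt0.
  have l1' : l <= 1 by rewrite ler_pdivrMr // mul1r; lra.
  exists (z + l *: d); split.
  + apply/rowP => j; rewrite svE /d fv_comb.
    have hs : s ord0 j = Num.sg (fv a j x0) by rewrite -hx0 svE.
    have hzj := hz j; rewrite svE hs in hzj; rewrite hs.
    exact: sg_comb.
  + apply: hB; split => // i j; rewrite (ord1 i) /ball /= !mxE.
    rewrite opprD addrA subrr add0r normrN normrM (gtr0_norm l0).
    have hdj : `|x0 ord0 j - z ord0 j| <= l1 d.
      rewrite (_ : x0 ord0 j - z ord0 j = d ord0 j); last by rewrite !mxE.
      rewrite /l1 (bigD1 j) //= lerDl; exact: sumr_ge0.
    apply: (le_lt_trans (y := l * l1 d)); first by rewrite ler_wpM2l // ltW.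
    rewrite /l mulrAC ltr_pdivrMr // ltr_pM2l //; lra.
Qed.

Lemma supp_fun_max (P : set V) x w : P x ->
  ((dot w x)%:E = supp_fun P w <-> forall y, P y -> dot w y <= dot w x).
Proof.
move=> Px; split.
- move=> h y Py; rewrite -lee_fin h; apply: ereal_sup_ubound; by exists y.
- move=> h; apply/eqP; rewrite eq_le; apply/andP; split.
  + by apply: ereal_sup_ubound; exists x.
  + by apply: ge_ereal_sup => _ [y Py <-]; rewrite lee_fin h.
Qed.

Lemma fv_add a i x d e : fv a i (x + e *: d) = fv a i x + e * dot (u i) d.
Proof. by rewrite /fv dotDr dotZr; ring. Qed.

Lemma fv_sub a i x y : dot (u i) (y - x) = fv a i y - fv a i x.
Proof. by rewrite /fv dotBr; ring. Qed.

Definition Dc s t d := forall i, t ord0 i = 0 ->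
  (Num.sg (dot (u i) d) = 0 \/ Num.sg (dot (u i) d) = s ord0 i).
Definition ncone s t := [set w : V | forall d, Dc s t d -> dot w d <= 0].

Lemma sg0_eq0 (r : R) : Num.sg r = 0 -> r = 0.
Proof. by move/eqP; rewrite sgr_eq0 => /eqP. Qed.

Lemma ncone_conf a s x : conf a s x ->
  normal_cone (conf a s) x = ncone s (signvec u a x).
Proof.
move=> Px; apply/seteqP; split => w /=.
- move=> /(supp_fun_max _ Px) h d hd.
  have hpos : forall i, signvec u a x ord0 i != 0 -> 0 < `|fv a i x|.
    by move=> i /=; rewrite svE sgr_eq0 normr_gt0.
  have [e e0 he] := @small_eps _ _ (fun i => signvec u a x ord0 i != 0)
    (fun i => `|fv a i x|) (fun i => dot (u i) d) hpos.
  have Py : conf a s (x + e *: d).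
    move=> i; rewrite svE fv_add.
    case: (eqVneq (signvec u a x ord0 i) 0) => ti.
    + have := hd i ti; rewrite svE in ti; rewrite (sg0_eq0 ti) add0r sgrM (gtr0_sg e0) mul1r.
      done.
    + have hlt := he i ti; rewrite -{1}(gtr0_norm e0) -normrM in hlt.
      have c0 : fv a i x != 0 by move: ti; rewrite svE sgr_eq0.
      by rewrite (sg_pert c0 hlt) -svE; apply: Px.
  have := h _ Py; rewrite dotDr dotZr => hh.
  have : e * dot w d <= 0 by lra.
  by rewrite pmulr_rle0.
- move=> h; apply/(supp_fun_max _ Px) => y Py.
  have : dot w (y - x) <= 0.
    apply: h => i ti; rewrite (fv_sub a); rewrite svE in ti.
    rewrite (sg0_eq0 ti) subr0 -svE; exact: Py.
  rewrite dotBr; lra.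
Qed.

Lemma sgle_mul (p s : R) : (Num.sg p = 0 \/ Num.sg p = s) -> 0 <= s * p /\ (s * p = 0 -> p = 0).
Proof.
case=> h.
- by rewrite (sg0_eq0 h) mulr0.
- rewrite -h -normrEsg; split => //; by move/normr0_eq0.
Qed.

Lemma fv_affine a j k (p : 'I_k -> V) (c : 'I_k -> R) : \sum_(i < k) c i = 1 ->
  fv a j (\sum_(i < k) c i *: p i) = \sum_(i < k) c i * fv a j (p i).
Proof.
move=> hc; rewrite /fv dot_sumr.
under eq_bigr do rewrite dotZr.
under [RHS]eq_bigr do rewrite mulrBr.
by rewrite sumrB -mulr_suml hc mul1r.
Qed.

Lemma face_of_point a s x : conf a s x ->
  exists G, poly_face (conf a s) G /\ relint G x.
Proof.
move=> Px; set t := signvec u a x.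
set G := [set y | conf a s y /\ forall i, t ord0 i = 0 -> fv a i y = 0].
set uG := \sum_(i | t ord0 i == 0) (- s ord0 i) *: u i.
have fx0 : forall i, t ord0 i = 0 -> fv a i x = 0 by move=> i; rewrite svE => /sg0_eq0.
have key : forall y, dot uG y - dot uG x = - \sum_(i | t ord0 i == 0) s ord0 i * fv a i y.
  move=> y; rewrite /uG !dot_suml -sumrB -sumrN; apply: eq_bigr => i /eqP ti.
  have := fx0 i ti; rewrite /fv !dotZl => /eqP; rewrite subr_eq0 => /eqP ->; ring.
have hge : forall y, conf a s y -> forall i, 0 <= s ord0 i * fv a i y /\ (s ord0 i * fv a i y = 0 -> fv a i y = 0).
  by move=> y Py i; apply: sgle_mul; rewrite -svE; exact: Py.
have xmax : forall y, conf a s y -> dot uG y <= dot uG x.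
  move=> y Py; have := key y; have : 0 <= \sum_(i | t ord0 i == 0) s ord0 i * fv a i y.
    by apply: sumr_ge0 => i _; case: (hge y Py i).
  lra.
have Gx : G x by split => //.
exists G; split.
- split; first by exists x.
  exists uG; apply/seteqP; split => y.
  + move=> [Py hy]; split => //=; apply/(supp_fun_max _ Py) => y' Py'.
    have := xmax y' Py'; have := key y.
    rewrite big1; last by move=> i /eqP ti; rewrite hy // mulr0.
    lra.
  + move=> [Py /= hy]; split => //.
    have := xmax y Py => hyx.
    have : dot uG x <= dot uG y.
      by move: hy => /(supp_fun_max _ Py) /(_ _ Px).
    move=> hxy; have hs : \sum_(i | t ord0 i == 0) s ord0 i * fv a i y = 0.
      have := key y; lra.
    move=> i ti; move: hs => /eqP; rewrite psumr_eq0; last by move=> j _; case: (hge y Py j).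
    move=> /allP /(_ i (mem_index_enum i)); rewrite ti eqxx /= => /eqP.
    by case: (hge y Py i) => _ h /h.
- split => //.
  have hpos : forall i, t ord0 i != 0 -> 0 < `|fv a i x|.
    by move=> i /=; rewrite svE sgr_eq0 normr_gt0.
  have [e e0 he] := @small_eps _ _ (fun i => t ord0 i != 0)
    (fun i => `|fv a i x|) (fun i => l1 (u i)) hpos.
  exists e; split => // z0 [hz [k [p [c [hp [hc hze]]]]]]; subst z0.
  have hz0 : forall i, t ord0 i = 0 -> fv a i (\sum_(i0 < k) c i0 *: p i0) = 0.
    move=> i ti; rewrite fv_affine // big1 // => j _.
    by case: (hp j) => _ /(_ i ti) ->; rewrite mulr0.
  have hz1 : forall i, t ord0 i != 0 -> signvec u a (\sum_(i0 < k) c i0 *: p i0) ord0 i = t ord0 i.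
    move=> i ti; rewrite !svE.
    have c0 : fv a i x != 0 by move: ti; rewrite svE sgr_eq0.
    set z := \sum_(i0 < k) c i0 *: p i0 in hz *.
    have := dot_ball (u i) hz => hd.
    have hlt : `|fv a i z - fv a i x| < `|fv a i x|.
      rewrite /fv opprB addrA subrK; apply: le_lt_trans hd _.
      have := he i ti; rewrite ger0_norm ?l1_ge0 //; lra.
    by have := sg_pert c0 hlt; rewrite addrC subrK.
  split.
  + move=> i; case: (eqVneq (t ord0 i) 0) => ti.
    * by left; rewrite svE hz0 // sgr0.
    * by rewrite hz1 //; apply: Px.
  + exact: hz0.
Qed.

Lemma fan_conf a s :
  normal_fan (conf a s) = [set ncone s (signvec u a x) | x in conf a s].
Proof.
apply/seteqP; split.
- move=> N [G [[_ [w hG]] [x [[Gx _] ->]]]].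
  have Px : conf a s x by move: Gx; rewrite hG => -[].
  by exists x => //; rewrite ncone_conf.
- move=> N [x Px <-].
  have [G [pf ri]] := face_of_point Px.
  exists G; split => //; exists x; split => //; by rewrite ncone_conf.
Qed.

Lemma uniq_sign a s s' : realized a s -> realized a s' ->
  closure (cell a s) `<=` closure (cell a s') -> sle s s'.
Proof.
move=> hs hs'; rewrite !closure_cell // => h.
have [x hx] := hs; have := h x; rewrite /conf /= hx; apply; exact: sle_refl.
Qed.

Lemma conf_sle a s s' : sle s s' -> conf a s `<=` conf a s'.
Proof. by move=> h x hx; apply: sle_trans hx h. Qed.

Lemma fan_sub a b s : (forall t, realized a t -> realized b t) ->
  [set ncone s (signvec u a x) | x in conf a s] `<=`
  [set ncone s (signvec u b x) | x in conf b s].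
Proof.
move=> hab N [x Px <-]; have [y hy] := hab _ (ex_intro _ x erefl).
exists y; last by rewrite hy.
by rewrite /conf /= hy.
Qed.

Lemma forward a b : arr_sign u a = arr_sign u b -> arr_normally_equiv u a b.
Proof.
move=> hsg.
have hab : forall t, realized a t <-> realized b t.
  move=> t; split => -[x hx].
  - have : arr_sign u b t by rewrite -hsg; exists x.
    by move=> [y _ hy]; exists y.
  - have : arr_sign u a t by rewrite hsg; exists x.
    by move=> [y _ hy]; exists y.
pose sF (F : set V) := xget 0 [set s | realized a s /\ F = closure (cell a s)].
have sFP : forall F, arr_faces u a F -> realized a (sF F) /\ F = closure (cell a (sF F)).
  move=> F [s [hs ->]]; apply: (@xgetPex _ 0 [set s | realized a s /\ _]).
  by exists s.
have sFE : forall s, realized a s -> sF (closure (cell a s)) = s.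
  move=> s hs; have [h1 h2] := sFP (closure (cell a s)) (ex_intro _ s (conj hs erefl)).
  apply: sle_anti; apply: (uniq_sign (a:=a)) => //; rewrite -?h2 //.
exists (fun F => closure (cell b (sF F))); split.
- move=> F /sFP [h1 h2]; exists (sF F); split => //; exact: (hab _).1.
- move=> F G /sFP [hF1 hF2] /sFP [hG1 hG2] e.
  have h1 : realized b (sF F) by apply: (hab _).1.
  have h2 : realized b (sF G) by apply: (hab _).1.
  have : sF F = sF G by apply: sle_anti; apply: (uniq_sign (a:=b)) => //; rewrite e.
  by move=> e'; rewrite hF2 hG2 e'.
- move=> G [t [ht ->]]; have ht' : realized a t by apply: (hab _).2.
  exists (closure (cell a t)); first by exists t.
  by rewrite sFE.
- move=> F G /sFP [hF1 hF2] /sFP [hG1 hG2] hFG.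
  have hle : sle (sF F) (sF G) by apply: (uniq_sign (a:=a)) => //; rewrite -hF2 -hG2.
  have hFb := (hab _).1 hF1; have hGb := (hab _).1 hG1.
  rewrite !closure_cell //.
  exact: conf_sle.
- move=> F /sFP [h1 h2]; rewrite /poly_normally_equiv.
  have h1b := (hab _).1 h1.
  rewrite [in LHS]h2 !closure_cell //.
  rewrite !fan_conf; apply/seteqP; split; apply: fan_sub => t; [exact: (hab t).1|exact: (hab t).2].
Qed.

Variable u_nz : forall i, u i != 0.
Variable u_nonpar : forall i j : 'I_m, i != j -> ~ (exists c : R, u i = c *: u j).

Lemma dot_self_neq0 (v : V) : v != 0 -> dot v v != 0.
Proof. by move=> v0; apply/eqP => /dot_self_eq0 h; move: v0; rewrite h eqxx. Qed.

Lemma proj_eq (v w : V) : v != 0 -> (forall d, dot v d = 0 -> dot w d = 0) ->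
  w = (dot w v / dot v v) *: v.
Proof.
move=> v0 h; set k := dot w v / dot v v.
have vv := dot_self_neq0 v0.
have hd : dot v (w - k *: v) = 0.
  by rewrite dotBr dotZr /k (dotC v w) mulfVK // subrr.
have := h _ hd => hw.
have : dot (w - k *: v) (w - k *: v) = 0 by rewrite dotDl dotNl dotZl hw hd mulr0 subr0.
by move/dot_self_eq0/eqP; rewrite subr_eq0 => /eqP.
Qed.

Definition unitv (v : R) := v = 1 \/ v = -1.
Lemma unitv_sq v : unitv v -> v * v = 1.
Proof. by case=> ->; rewrite ?mulr1 ?mulrNN ?mulr1. Qed.
Lemma unitv_sg v : unitv v -> Num.sg v = v.
Proof. by case=> ->; rewrite ?sgr1 ?sgrN ?sgr1. Qed.
Lemma unitv_neq0 v : unitv v -> v != 0.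
Proof. by case=> ->; rewrite ?oppr_eq0 oner_eq0. Qed.

Lemma realized_vals c s j : realized c s -> s ord0 j = 0 \/ unitv (s ord0 j).
Proof.
move=> [x <-]; rewrite svE; case: (sg_cases (fv c j x)) => [[_ ->]|[[_ ->]|[_ ->]]].
- by right; right.
- by left.
- by right; left.
Qed.

Lemma realized_unit c s j : realized c s -> s ord0 j != 0 -> unitv (s ord0 j).
Proof. by move=> hs; case: (realized_vals j hs) => [->|//]; rewrite eqxx. Qed.

Definition zone (s : S) i := s ord0 i = 0 /\ forall j, j != i -> s ord0 j != 0.
Definition span1 (v : V) := [set k *: v | k in [set: R]].
Definition ray1 (v : V) := [set k *: v | k in [set k : R | 0 <= k]].

Lemma Dc_neg s t d : (forall i, t ord0 i = 0 -> s ord0 i = 0) -> Dc s t d -> Dc s t (- d).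
Proof.
move=> hz hd i ti; have := hd i ti; rewrite (hz i ti) dotNr sgrN.
by case=> ->; rewrite oppr0; left.
Qed.

Lemma ncone_line s i : zone s i -> ncone s s = span1 (u i).
Proof.
move=> [si sj]; have hz : forall j, s ord0 j = 0 -> j = i.
  by move=> j sj0; apply/eqP; apply: contraT => ji; have := sj j ji; rewrite sj0 eqxx.
apply/seteqP; split => w /=.
- move=> hw; exists (dot w (u i) / dot (u i) (u i)) => //; apply/esym/proj_eq => // d hd.
  have hD : Dc s s d by move=> j /hz ->; left; rewrite hd sgr0.
  have h1 := hw _ hD.
  have h2 := hw _ (Dc_neg (fun _ h => h) hD); rewrite dotNr in h2.
  lra.
- move=> [k _ <-] d hd; rewrite dotZl.
  have := hd i si; rewrite si; case=> /sg0_eq0 ->; by rewrite mulr0.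
Qed.

Lemma ncone_factA s t j : sle t s -> s ord0 j = 0 -> ncone s t (u j).
Proof.
move=> hts sj d hd; have tj : t ord0 j = 0 by case: (hts j) => ->.
by have := hd j tj; rewrite sj; case=> /sg0_eq0 ->.
Qed.

Lemma ncone_factB s t j : t ord0 j = 0 -> ncone s t ((- s ord0 j) *: u j).
Proof.
move=> tj d hd; rewrite dotZl mulNr oppr_le0.
by have [h _] := sgle_mul (hd j tj).
Qed.

Lemma nonpar_scale i j k : i != j -> u i = k *: u j -> False.
Proof. by move=> ij h; apply: (u_nonpar ij); exists k. Qed.

Lemma line_zone c s t i : realized c s -> realized c t -> sle t s ->
  ncone s t = span1 (u i) -> zone s i.
Proof.
move=> hs ht hts hN.
have A : forall j, s ord0 j = 0 -> j = i.
  move=> j sj; have := ncone_factA hts sj; rewrite hN => -[k _ hk].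
  by apply/eqP; apply: contraT => ji; case: (nonpar_scale ji (esym hk)).
have B : forall j, t ord0 j = 0 -> s ord0 j != 0 -> j = i.
  move=> j tj sj; have := ncone_factB (s:=s) tj; rewrite hN => -[k _ hk].
  have hu := realized_unit hs sj.
  apply/eqP; apply: contraT => ji; case: (nonpar_scale (k := - (s ord0 j) * k) ji).
  by rewrite -scalerA hk scalerA mulrN mulNr opprK unitv_sq // scale1r.
have si : s ord0 i = 0.
  apply: contraTeq isT => si.
  have hu := realized_unit hs si.
  have hsj : forall j, s ord0 j != 0.
    by move=> j; apply/eqP => sj0; move: si; rewrite -(A j sj0) sj0 eqxx.
  have hti : forall j, t ord0 j = 0 -> j = i by move=> j tj; apply: B tj (hsj j).
  have h1 : ncone s t (u i) by rewrite hN; exists 1 => //; rewrite scale1r.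
  have h2 : ncone s t (- u i) by rewrite hN; exists (-1) => //; rewrite scaleN1r.
  have hD : Dc s t (s ord0 i *: u i).
    move=> j /hti ->; right; rewrite dotZr sgrM unitv_sg // gtr0_sg ?mulr1 //.
    by rewrite lt_def dot_self_neq0 ?u_nz // dot_self_ge0.
  have := h1 _ hD; have := h2 _ hD; rewrite dotNl !dotZr => h5 h6.
  have h7 : s ord0 i * dot (u i) (u i) = 0 by lra.
  have : dot (u i) (u i) = 0.
    by rewrite -[dot _ _]mul1r -(unitv_sq hu) -mulrA h7 mulr0.
  by move=> /eqP; rewrite (negbTE (dot_self_neq0 (u_nz i))).
split => // j ji; apply/eqP => sj0; by move: ji; rewrite (A j sj0) eqxx.
Qed.

Lemma ray_facet c k g i : realized c k -> (forall j, k ord0 j != 0) -> zone g i -> sle g k ->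
  ncone k g = ray1 ((- k ord0 i) *: u i).
Proof.
move=> hk knz [gi gj] hgk.
have hz : forall j, g ord0 j = 0 -> j = i.
  by move=> j gj0; apply/eqP; apply: contraT => ji; have := gj j ji; rewrite gj0 eqxx.
have hu := realized_unit hk (knz i).
have qp : 0 < dot (u i) (u i) by rewrite lt_def dot_self_neq0 ?u_nz // dot_self_ge0.
apply/seteqP; split => w /=.
- move=> hw.
  have hw0 : forall d, dot (u i) d = 0 -> dot w d = 0.
    move=> d hd.
    have hD : Dc k g d by move=> j /hz ->; left; rewrite hd sgr0.
    have hD' : Dc k g (- d) by move=> j /hz ->; left; rewrite dotNr hd oppr0 sgr0.
    have := hw _ hD; have := hw _ hD'; rewrite dotNr; lra.
  have e := proj_eq (u_nz i) hw0; set q := dot w (u i) / dot (u i) (u i) in e.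
  have hD : Dc k g (k ord0 i *: u i).
    by move=> j /hz ->; right; rewrite dotZr sgrM unitv_sg // gtr0_sg // mulr1.
  have := hw _ hD; rewrite e dotZl dotZr => hle.
  exists (- q * k ord0 i) => /=.
    have : q * (k ord0 i * dot (u i) (u i)) <= 0 by [].
    rewrite mulrA => h'; have : q * k ord0 i <= 0 by rewrite -(pmulr_rle0 _ qp) mulrC.
    by rewrite mulNr oppr_ge0.
  by rewrite scalerA; congr (_ *: _); rewrite -[RHS]mulr1 -(unitv_sq hu); ring.
- move=> [q /= q0 <-] d hd; rewrite !dotZl mulNr mulrN oppr_le0; apply: mulr_ge0 => //.
  by have [h _] := sgle_mul (hd i gi).
Qed.

Lemma ray_sign c k t v i : realized c k -> realized c t -> (forall j, k ord0 j != 0) ->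
  sle t k -> unitv v -> ncone k t = ray1 ((- v) *: u i) -> k ord0 i = v.
Proof.
move=> hk ht knz htk hv hN.
have qp : 0 < dot (u i) (u i) by rewrite lt_def dot_self_neq0 ?u_nz // dot_self_ge0.
have [j tj] : exists j, t ord0 j = 0.
  apply: contrapT => hne.
  have hD : Dc k t ((- v) *: u i) by move=> j tj; case: hne; exists j.
  have : ncone k t ((- v) *: u i) by rewrite hN; exists 1 => //=; rewrite scale1r.
  move=> /(_ _ hD); rewrite dotZl dotZr mulrA mulrNN unitv_sq // mul1r.
  by rewrite leNgt qp.
have := ncone_factB (s:=k) tj; rewrite hN => -[q /= q0 hq].
have hkj := realized_unit hk (knz j).
have ji : j = i.
  apply/eqP; apply: contraT => ji; case: (nonpar_scale (k := - (k ord0 j) * (q * - v)) ji).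
  by rewrite -scalerA -scalerA hq scalerA mulrNN unitv_sq // scale1r.
subst j.
have : (k ord0 i - q * v) *: u i = 0.
  have : (- k ord0 i) *: u i = (q * - v) *: u i by rewrite -hq scalerA.
  move=> e; rewrite scalerBl; apply/eqP; rewrite subr_eq0; apply/eqP.
  by move: e; rewrite !scaleNr mulrN scaleNr => /oppr_inj.
move/eqP; rewrite scaler_eq0 (negbTE (u_nz i)) orbF subr_eq0 => /eqP e.
case: hv e hkj => -> e; rewrite e; case => h //; move: h; rewrite ?mulr1 ?mulrN1 => h; lra.
Qed.

Lemma ncone_inj c s t1 t2 : realized c t1 -> realized c t2 -> sle t1 s -> sle t2 s ->
  ncone s t1 = ncone s t2 -> t1 = t2.
Proof.
have key : forall t1 t2, realized c t1 -> realized c t2 -> sle t1 s -> sle t2 s ->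
    ncone s t1 = ncone s t2 -> forall j, t1 ord0 j = 0 -> t2 ord0 j = 0.
  move=> {}t1 {}t2 [y hy] [x hx] h1s h2s hN j t1j.
  apply: contraTeq isT => t2j.
  have t2s : t2 ord0 j = s ord0 j by case: (h2s j) => // e; move: t2j; rewrite e eqxx.
  have := ncone_factB (s:=s) t1j; rewrite hN => /(_ (y - x)).
  have hD : Dc s t2 (y - x).
    move=> i t2i; rewrite (fv_sub c).
    have fx : fv c i x = 0 by apply: sg0_eq0; rewrite -svE hx.
    rewrite fx subr0 -svE hy; exact: h1s.
  move=> /(_ hD); rewrite dotZl (fv_sub c).
  have fy : fv c j y = 0 by apply: sg0_eq0; rewrite -svE hy.
  rewrite fy sub0r mulrNN -t2s -hx svE -normrEsg.
  have : fv c j x != 0 by rewrite -sgr_eq0 -svE hx.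
  by rewrite -normr_gt0 => h1 h2; move: h1; rewrite ltNge h2.
move=> h1 h2 h1s h2s hN; apply/rowP => j.
case: (eqVneq (t1 ord0 j) 0) => e1.
- by rewrite e1 (key t1 t2).
- have e2 : t2 ord0 j != 0 by apply: contra e1 => /eqP e2; rewrite (key t2 t1) //.
  by case: (h1s j) e1 => [->|->]; rewrite ?eqxx //; case: (h2s j) e2 => [->|->]; rewrite ?eqxx.
Qed.

Lemma sum_neq0 (p q : R) : p != 0 -> `|q| < `|p| -> p + q != 0.
Proof. by move=> p0 hq; rewrite -sgr_eq0 sg_pert // sgr_eq0. Qed.

Lemma gen_vec i (s : seq 'I_m) : exists w : V,
  dot (u i) w = 0 /\ forall j, j \in s -> j != i -> dot (u j) w != 0.
Proof.
elim: s => [|j s [w' [hi hs]]]; first by exists 0; split => //; rewrite dot0r.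
case: (eqVneq j i) => [ji|ji].
  exists w'; split => // l; rewrite inE => /orP [/eqP ->|ls]; first by rewrite ji eqxx.
  exact: hs.
case: (eqVneq (dot (u j) w') 0) => hj; last first.
  exists w'; split => // l; rewrite inE => /orP [/eqP ->|ls] //; exact: hs.
set q := dot (u i) (u i); have qn := dot_self_neq0 (u_nz i).
set k := dot (u j) (u i) / q.
set pj := u j - k *: u i.
have hpi : dot (u i) pj = 0 by rewrite /pj dotBr dotZr (dotC (u i) (u j)) /k mulfVK // subrr.
have pn : pj != 0.
  apply/eqP => e; apply: (nonpar_scale (k := k) ji); apply/eqP.
  by rewrite -subr_eq0 -/pj e.
have hpj : dot (u j) pj = dot pj pj.
  by rewrite -{1}(subrK (k *: u i) (u j)) -/pj dotDl dotZl hpi mulr0 addr0.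
have hpos : forall l, (l \in s) && (l != i) -> 0 < `|dot (u l) w'|.
  by move=> l /andP [ls li]; rewrite normr_gt0; apply: hs.
have [e e0 he] := @small_eps _ _ (fun l => (l \in s) && (l != i))
  (fun l => `|dot (u l) w'|) (fun l => dot (u l) pj) hpos.
exists (w' + e *: pj); split.
  by rewrite dotDr dotZr hi hpi mulr0 addr0.
move=> l; rewrite inE => /orP [/eqP ->|ls] li.
  rewrite dotDr dotZr hj add0r; apply: mulf_neq0; first by rewrite (gt_eqF e0).
  by rewrite hpj; exact: dot_self_neq0.
rewrite dotDr dotZr; apply: sum_neq0; first exact: hs.
by rewrite normrM (gtr0_norm e0); apply: he; rewrite ls li.
Qed.

Lemma generic c s i : realized c s -> s ord0 i = 0 ->
  exists t, realized c t /\ sle s t /\ zone t i.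
Proof.
move=> [x hx] si.
have [w [wi wj]] := gen_vec i (enum 'I_m).
have hpos : forall j, s ord0 j != 0 -> 0 < `|fv c j x|.
  by move=> j; rewrite -hx svE sgr_eq0 normr_gt0.
have [e e0 he] := @small_eps _ _ (fun j => s ord0 j != 0)
  (fun j => `|fv c j x|) (fun j => dot (u j) w) hpos.
have hz : forall j, s ord0 j = 0 -> fv c j x = 0.
  by move=> j; rewrite -hx svE => /sg0_eq0.
have key : forall j, signvec u c (x + e *: w) ord0 j =
  if s ord0 j == 0 then Num.sg (e * dot (u j) w) else s ord0 j.
  move=> j; rewrite svE fv_add; case: (eqVneq (s ord0 j) 0) => sj.
    by rewrite hz // add0r.
  have hf : fv c j x != 0 by rewrite -sgr_eq0 -svE hx.
  rewrite sg_pert //; first by rewrite -svE hx.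
  by rewrite normrM (gtr0_norm e0); apply: he.
exists (signvec u c (x + e *: w)); split; first by exists (x + e *: w).
split.
  move=> j; rewrite key; case: (eqVneq (s ord0 j) 0) => sj; [by left|by right].
split; first by rewrite key si eqxx wi mulr0 sgr0.
move=> j ji; rewrite key; case: (eqVneq (s ord0 j) 0) => // sj.
rewrite sgr_eq0; apply: mulf_neq0; first by rewrite (gt_eqF e0).
by apply: wj => //; rewrite mem_enum.
Qed.

Lemma region_near c g i v : realized c g -> zone g i -> unitv v ->
  exists k, realized c k /\ sle g k /\ (forall j, k ord0 j != 0) /\ k ord0 i = v.
Proof.
move=> [y hy] [gi gj] hv.
have hpos : forall j, j != i -> 0 < `|fv c j y|.
  by move=> j ji; rewrite normr_gt0 -sgr_eq0 -svE hy; exact: gj.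
have [e e0 he] := @small_eps _ _ (fun j => j != i)
  (fun j => `|fv c j y|) (fun j => dot (u j) (v *: u i)) hpos.
have qp : 0 < dot (u i) (u i) by rewrite lt_def dot_self_neq0 ?u_nz // dot_self_ge0.
have key : forall j, j != i -> signvec u c (y + e *: (v *: u i)) ord0 j = g ord0 j.
  move=> j ji; rewrite svE fv_add sg_pert; first by rewrite -svE hy.
    by rewrite -sgr_eq0 -svE hy; exact: gj.
  by rewrite normrM (gtr0_norm e0); apply: he.
have keyi : signvec u c (y + e *: (v *: u i)) ord0 i = v.
  rewrite svE fv_add.
  have -> : fv c i y = 0 by apply: sg0_eq0; rewrite -svE hy.
  rewrite add0r dotZr !sgrM (gtr0_sg e0) (gtr0_sg qp) unitv_sg //; ring.
exists (signvec u c (y + e *: (v *: u i))); split; first by eexists.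
split.
  move=> j; case: (eqVneq j i) => [->|ji]; first by left.
  by right; rewrite key.
split; last by [].
move=> j; case: (eqVneq j i) => [->|ji]; first by rewrite keyi; exact: unitv_neq0.
by rewrite key //; exact: gj.
Qed.

Lemma hyper_pt c i : exists x, fv c i x = 0.
Proof.
exists ((c i / dot (u i) (u i)) *: u i).
by rewrite /fv dotZr mulfVK ?subrr // dot_self_neq0.
Qed.

Lemma local_sle c (x d : V) l0 : exists2 e : R, 0 < e & forall l, `|l - l0| < e ->
  sle (signvec u c (x + l0 *: d)) (signvec u c (x + l *: d)).
Proof.
set z0 := x + l0 *: d.
have hpos : forall j, signvec u c z0 ord0 j != 0 -> 0 < `|fv c j z0|.
  by move=> j; rewrite svE sgr_eq0 normr_gt0.
have [e e0 he] := @small_eps _ _ (fun j => signvec u c z0 ord0 j != 0)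
  (fun j => `|fv c j z0|) (fun j => dot (u j) d) hpos.
exists e => // l hl j.
case: (eqVneq (signvec u c z0 ord0 j) 0) => hj; first by left.
right; have -> : x + l *: d = z0 + (l - l0) *: d.
  by rewrite /z0 -addrA -scalerDl addrCA subrr addr0.
have f0 : fv c j z0 != 0 by rewrite -sgr_eq0 -svE.
have hlt : `|(l - l0) * dot (u j) d| < `|fv c j z0|.
  rewrite normrM; apply: le_lt_trans (he j hj).
  by rewrite ler_wpM2r // ltW.
by apply/esym; rewrite !svE (fv_add c j z0 d (l - l0)) (sg_pert f0 hlt).
Qed.

Lemma segment_prop c x y i (Q : S -> Prop) :
  Num.sg (fv c i x) = Num.sg (fv c i y) -> fv c i y != 0 ->
  (forall t1 t2, realized c t1 -> realized c t2 -> sle t1 t2 -> t1 ord0 i != 0 ->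
     (Q t1 <-> Q t2)) ->
  Q (signvec u c y) -> Q (signvec u c x).
Proof.
move=> hxy hy hloc Qy.
set d := y - x.
pose z l := x + l *: d.
have hz0 : z 0 = x by rewrite /z scale0r addr0.
have hz1 : z 1 = y by rewrite /z scale1r /d addrC subrK.
have hi : forall l, 0 <= l -> l <= 1 -> signvec u c (z l) ord0 i != 0.
  move=> l l0 l1; rewrite svE; case: (eqVneq l 0) => [->|ln0].
    by rewrite hz0 hxy sgr_eq0.
  rewrite /z /d fv_comb sg_comb ?sgr_eq0 //; first by rewrite lt_def ln0.
  by right.
have hQ : forall l0, 0 <= l0 -> l0 <= 1 -> exists2 e : R, 0 < e & forall l, 0 <= l -> l <= 1 ->
    `|l - l0| < e -> (Q (signvec u c (z l0)) <-> Q (signvec u c (z l))).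
  move=> l0 h0 h1; have [e e0 he] := local_sle c x d l0.
  exists e => // l h0' h1' hl; apply: hloc.
  - by eexists.
  - by eexists.
  - exact: he.
  - exact: hi.
apply: contrapT => nQx.
set B := [set l : R | 0 <= l /\ l <= 1 /\ ~ Q (signvec u c (z l))].
have B0 : B 0 by split => //; split => //; rewrite hz0.
have hB : has_sup B by split; [exists 0 | exists 1 => l [_ []]].
have L0 : 0 <= sup B by apply: sup_upper_bound.
have L1 : sup B <= 1 by apply: ge_sup; [exists 0 | move=> l [_ []]].
have [e e0 he] := hQ _ L0 L1.
have [QL|nQL] := pselect (Q (signvec u c (z (sup B)))).
- have [b hBb hb] := sup_adherent e0 hB.
  have bL := sup_upper_bound hB hBb.
  case: hBb => b0 [b1 nQb]; apply: nQb.
  have hl : `|b - sup B| < e by rewrite ler0_norm ?subr_le0 //; lra.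
  exact: (he _ b0 b1 hl).1 QL.
- have L1' : sup B < 1.
    rewrite lt_def L1 andbT; apply/eqP => L1e; apply: nQL; by rewrite -L1e hz1.
  have [hle|hgt] := leP (sup B + e / 2) 1.
  + have hl0 : 0 <= sup B + e / 2 by rewrite addr_ge0 // divr_ge0 // ltW.
    have : B (sup B + e / 2).
      split => //; split => //; move=> hQl; apply: nQL.
      have hl : `|sup B + e / 2 - sup B| < e.
        rewrite addrC addKr ger0_norm ?divr_ge0 ?ltW //; lra.
      exact: (he _ hl0 hle hl).2 hQl.
    move/(sup_upper_bound hB); lra.
  + have : B 1.
      split => //; split => //; move=> hQl; apply: nQL.
      have hl : `|1 - sup B| < e by rewrite ger0_norm ?subr_ge0 //; lra.
      exact: (he 1 ler01 (lexx 1) hl).2 hQl.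
    move/(sup_upper_bound hB); lra.
Qed.

Definition sgvec (s : S) := forall i, s ord0 i = 0 \/ unitv (s ord0 i).
Lemma realized_sgvec c s : realized c s -> sgvec s.
Proof. by move=> hs i; exact: realized_vals i hs. Qed.

Definition code (s : S) : {ffun 'I_m -> 'I_3} :=
  [ffun i => if s ord0 i == 0 then inord 1 else if s ord0 i == 1 then inord 2 else inord 0].
Definition toS (c : {ffun 'I_m -> 'I_3}) : S := \row_i (((c i : nat)%:R : R) - 1).

Lemma toS_code s : sgvec s -> toS (code s) = s.
Proof.
move=> hs; apply/rowP => i; rewrite !mxE ffunE.
case: (hs i) => [->|[->|->]]; rewrite ?eqxx /=.
- by rewrite inordK // subrr.
- rewrite oner_eq0 /= inordK //; lra.
- rewrite (_ : (-1 == 0) = false); last by rewrite oppr_eq0 oner_eq0.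
  rewrite (_ : (-1 == 1) = false) /=; last first.
    by apply/negbTE/eqP; lra.
  by rewrite inordK // sub0r.
Qed.

Lemma toS_inj : injective toS.
Proof.
move=> c1 c2 e; apply/ffunP => i; apply: val_inj => /=.
have := congr1 (fun s : S => s ord0 i) e; rewrite !mxE => /eqP.
by rewrite (can_eq (addrK _)) eqr_nat => /eqP.
Qed.

Lemma fin_surj (A B : set S) (f g : S -> S) :
  (forall s, A s -> sgvec s) -> (forall s, B s -> sgvec s) ->
  (forall s, A s -> B (f s)) -> (forall s1 s2, A s1 -> A s2 -> f s1 = f s2 -> s1 = s2) ->
  (forall s, B s -> A (g s)) -> (forall s1 s2, B s1 -> B s2 -> g s1 = g s2 -> s1 = s2) ->
  forall t, B t -> exists2 s, A s & f s = t.
Proof.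
move=> hA hB fAB finj gBA ginj t Bt.
pose FA := [set c : {ffun 'I_m -> 'I_3} | `[< A (toS c) >] ]%SET.
pose FB := [set c : {ffun 'I_m -> 'I_3} | `[< B (toS c) >] ]%SET.
pose F c := code (f (toS c)).
pose G c := code (g (toS c)).
have inFA c : (c \in FA) = `[< A (toS c) >] by rewrite /FA inE.
have inFB c : (c \in FB) = `[< B (toS c) >] by rewrite /FB inE.
have Finj : {in FA &, injective F}.
  move=> c1 c2; rewrite !inFA => /asboolP h1 /asboolP h2 e.
  apply: toS_inj; apply: finj => //.
  by rewrite -(toS_code (hB _ (fAB _ h1))) -(toS_code (hB _ (fAB _ h2))); congr toS.
have Ginj : {in FB &, injective G}.
  move=> c1 c2; rewrite !inFB => /asboolP h1 /asboolP h2 e.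
  apply: toS_inj; apply: ginj => //.
  by rewrite -(toS_code (hA _ (gBA _ h1))) -(toS_code (hA _ (gBA _ h2))); congr toS.
have FsubB : (F @: FA)%SET \subset FB.
  apply/fintype.subsetP => _ /imsetP [c cA ->]; rewrite inFB; apply/asboolP.
  rewrite /F toS_code; last by apply: hB; apply: fAB; move: cA; rewrite inFA => /asboolP.
  by apply: fAB; move: cA; rewrite inFA => /asboolP.
have GsubA : (G @: FB)%SET \subset FA.
  apply/fintype.subsetP => _ /imsetP [c cB ->]; rewrite inFA; apply/asboolP.
  rewrite /G toS_code; last by apply: hA; apply: gBA; move: cB; rewrite inFB => /asboolP.
  by apply: gBA; move: cB; rewrite inFB => /asboolP.
have c1 := subset_leq_card FsubB; rewrite (card_in_imset Finj) in c1.
have c2 := subset_leq_card GsubA; rewrite (card_in_imset Ginj) in c2.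
have e : (F @: FA)%SET = FB.
  apply/eqP; rewrite eqEcard FsubB (card_in_imset Finj) /=.
  exact: c2.
have : code t \in FB by rewrite inFB; apply/asboolP; rewrite toS_code //; exact: hB.
rewrite -e => /imsetP [c cA ec].
exists (toS c); first by move: cA; rewrite inFA => /asboolP.
rewrite -(toS_code (hB _ Bt)) ec /F toS_code //.
by apply: hB; apply: fAB; move: cA; rewrite inFA => /asboolP.
Qed.

Definition fanS c s := [set ncone s (signvec u c x) | x in conf c s].

Lemma fanS_in c s t : realized c t -> sle t s -> fanS c s (ncone s t).
Proof. by move=> [x hx] hts; exists x; rewrite /conf /= hx. Qed.

Lemma fanS_out c s N : fanS c s N -> exists t, [/\ realized c t, sle t s & N = ncone s t].
Proof. by move=> [x hx <-]; exists (signvec u c x); split => //; exists x. Qed.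

Lemma converse_core a b (psi : S -> S) :
  (forall s, realized a s -> realized b (psi s)) ->
  (forall s1 s2, realized a s1 -> realized a s2 -> sle s1 s2 -> sle (psi s1) (psi s2)) ->
  (forall s1 s2, realized a s1 -> realized a s2 -> psi s1 = psi s2 -> s1 = s2) ->
  (forall t, realized b t -> exists2 s, realized a s & psi s = t) ->
  (forall s, realized a s -> fanS a s = fanS b (psi s)) ->
  forall s, realized a s -> psi s = s.
Proof.
move=> hR hM hI hS hF.
have rev : forall s1 s2, realized a s1 -> realized a s2 -> sle (psi s1) (psi s2) -> sle s1 s2.
  move=> s1 s2 h1 h2 hle.
  pose A := [set t | realized a t /\ sle t s2].
  pose B := [set t | realized b t /\ sle t (psi s2)].
  pose g t := xget 0 [set t' | A t' /\ ncone (psi s2) t = ncone s2 t'].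
  have gP : forall t, B t -> A (g t) /\ ncone (psi s2) t = ncone s2 (g t).
    move=> t [ht hts]; apply: (@xgetPex _ 0 [set t' | A t' /\ _]).
    have := fanS_in ht hts; rewrite -hF // => /fanS_out [t' [h1' h2' h3']].
    by exists t'.
  have [s hs e] := @fin_surj A B psi g
    (fun s hs => realized_sgvec (proj1 hs) ) (fun s hs => realized_sgvec (proj1 hs) )
    (fun s hs => conj (hR _ (proj1 hs) ) (hM _ _ (proj1 hs) h2 (proj2 hs)))
    (fun s1 s2 h1 h2 => hI _ _ (proj1 h1) (proj1 h2) )
    (fun t ht => (gP t ht).1 )
    (fun t1 t2 h1 h2 e => ncone_inj (proj1 h1) (proj1 h2) (proj2 h1) (proj2 h2)
        (etrans (gP t1 h1).2 (etrans (congr1 (ncone s2) e) (esym (gP t2 h2).2))))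
    (psi s1) (conj (hR _ h1) hle).
  by rewrite -(hI _ _ (proj1 hs) h1 e); exact: (proj2 hs).
have lines : forall s i, realized a s -> zone s i -> zone (psi s) i.
  move=> s i hs hz.
  have := fanS_in hs (sle_refl s); rewrite (ncone_line hz) hF //.
  move=> /fanS_out [t [ht hts e]].
  exact: (line_zone (hR _ hs) ht hts (esym e)).
have lines' : forall s i, realized a s -> zone (psi s) i -> zone s i.
  move=> s i hs hz.
  have := fanS_in (hR _ hs) (sle_refl (psi s)); rewrite (ncone_line hz) -hF //.
  move=> /fanS_out [t [ht hts e]].
  exact: (line_zone hs ht hts (esym e)).
have zp : forall s i, realized a s -> s ord0 i = 0 -> psi s ord0 i = 0.
  move=> s i hs si.
  have [t [ht [hst hz]]] := generic hs si.
  have [pti _] := lines _ _ ht hz.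
  by case: (hM _ _ hs ht hst i) => // ->.
have zp' : forall s i, realized a s -> psi s ord0 i = 0 -> s ord0 i = 0.
  move=> s i hs si.
  have [t' [ht' [hst' hz']]] := generic (hR _ hs) si.
  have [s' hs' e] := hS _ ht'.
  rewrite -e in hz' hst'; have [s'i _] := lines' _ _ hs' hz'.
  have hle : sle s s' by apply: rev.
  by case: (hle i) => // ->.
have regsign : forall k g i, realized a k -> (forall j, k ord0 j != 0) -> realized a g ->
    zone g i -> sle g k -> psi k ord0 i = k ord0 i.
  move=> k g i hk knz hg hz hgk.
  have pknz : forall j, psi k ord0 j != 0.
    by move=> j; apply/eqP => /(zp' _ _ hk) /eqP; rewrite (negbTE (knz j)).
  have := fanS_in hg hgk; rewrite (ray_facet hk knz hz hgk) hF //.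
  move=> /fanS_out [t' [ht' hts' e]].
  exact: (ray_sign (hR _ hk) ht' pknz hts' (realized_unit hk (knz i)) (esym e)).
move=> s hs; apply/rowP => j.
case: (eqVneq (s ord0 j) 0) => sj; first by rewrite sj; apply: zp.
have hv := realized_unit hs sj.
have [p hp] := hyper_pt a j.
have hpr : realized a (signvec u a p) by exists p.
have hpj : signvec u a p ord0 j = 0 by rewrite svE hp sgr0.
have [g [hg [_ hz]]] := generic hpr hpj.
have [k [hk [hgk [knz kj]]]] := region_near hg hz hv.
have pkj : psi k ord0 j = s ord0 j by rewrite -kj; exact: regsign hk knz hg hz hgk.
have [x hx] := hs; have [y hy] := hk.
have := @segment_prop a x y j (fun t => psi t ord0 j = s ord0 j).
rewrite hx hy; apply => //.
- by rewrite -!svE hx hy kj.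
- by rewrite -sgr_eq0 -svE hy; exact: knz.
- move=> t1 t2 h1 h2 h12 t1j.
  have p1 : psi t1 ord0 j != 0 by apply: contra t1j => /eqP /(zp' _ _ h1) ->.
  have := hM _ _ h1 h2 h12 j; case=> [/eqP|e]; first by rewrite (negbTE p1).
  by rewrite e.
Qed.

Lemma backward a b : arr_normally_equiv u a b -> arr_sign u a = arr_sign u b.
Proof.
move=> [Psi [hf hinj hsurj hmono hfan]].
have hfa : forall s, realized a s -> arr_faces u a (closure (cell a s)).
  by move=> s hs; exists s.
pose psi s := xget 0 [set t | realized b t /\ Psi (closure (cell a s)) = closure (cell b t)].
have psiP : forall s, realized a s ->
    realized b (psi s) /\ Psi (closure (cell a s)) = closure (cell b (psi s)).
  move=> s hs; apply: (@xgetPex _ 0 [set t | realized b t /\ _]).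
  by have [t [ht e]] := hf _ (hfa s hs); exists t.
have hR : forall s, realized a s -> realized b (psi s) by move=> s /psiP [].
have hM : forall s1 s2, realized a s1 -> realized a s2 -> sle s1 s2 -> sle (psi s1) (psi s2).
  move=> s1 s2 h1 h2 h12.
  have : closure (cell a s1) `<=` closure (cell a s2).
    by rewrite !closure_cell //; exact: conf_sle.
  move=> /(hmono _ _ (hfa _ h1) (hfa _ h2)).
  rewrite (proj2 (psiP _ h1)) (proj2 (psiP _ h2)).
  by apply: (uniq_sign (a:=b)); apply: hR.
have hI : forall s1 s2, realized a s1 -> realized a s2 -> psi s1 = psi s2 -> s1 = s2.
  move=> s1 s2 h1 h2 e.
  have : closure (cell a s1) = closure (cell a s2).
    apply: hinj; try exact: hfa.
    by rewrite (proj2 (psiP _ h1)) (proj2 (psiP _ h2)) e.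
  move=> e'; apply: sle_anti; apply: (uniq_sign (a:=a)) => //; by rewrite e'.
have hS : forall t, realized b t -> exists2 s, realized a s & psi s = t.
  move=> t ht; have [F [s [hs eF]] eP] := hsurj (closure (cell b t)) (ex_intro _ t (conj ht erefl)).
  exists s => //.
  have e : closure (cell b (psi s)) = closure (cell b t).
    by rewrite -(proj2 (psiP _ hs)) -eF.
  apply: sle_anti; apply: (uniq_sign (a:=b)) => //; try exact: hR; by rewrite e.
have hF : forall s, realized a s -> fanS a s = fanS b (psi s).
  move=> s hs; have := hfan _ (hfa s hs); rewrite /poly_normally_equiv.
  rewrite (proj2 (psiP _ hs)) !closure_cell //; last exact: hR.
  by rewrite !fan_conf.
have core := converse_core hR hM hI hS hF.
apply/seteqP; split => _ [x _ <-].
- have hs : realized a (signvec u a x) by exists x.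
  have := hR _ hs; rewrite core // => -[y hy]; by exists y.
- have [s hs e] := hS (signvec u b x) (ex_intro _ x erefl).
  rewrite -e core //; have [y hy] := hs; by exists y.
Qed.
End Arr.

Theorem mainTheorem18 (R : realType) (n m : nat) (u : 'I_m -> 'rV[R]_n)
  (u_nz : forall i, u i != 0)
  (u_nonpar : forall i j : 'I_m, i != j -> ~ (exists c : R, u i = c *: u j))
  (a b : 'I_m -> R) :
  arr_normally_equiv u a b <-> arr_sign u a = arr_sign u b.
Proof.
split; last exact: forward.
exact: backward u_nz u_nonpar a b.
Qed.
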